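(* For every approval-based participatory budgeting instance $I=(N,\mathcal{T},B,\mathrm{cost},\mathcal{A})$ and every nonempty set of projects $T\subseteq\mathcal{T}$, the proportionality degree of the Method of Equal Shares satisfies \[ d_{\textsc{mes}}(T)\;\geq\;\frac{1}{2}\left(\frac{\mathrm{cost}(T)}{\max_{t\in T}\mathrm{cost}(t)}-1\right). \]
   Context: An approval-based PB instance is $I=(N,\mathcal{T},B,\mathrm{cost},\mathcal{A})$: $N$ is a set of $n$ voters, $\mathcal{T}$ a finite set of projects, $B>0$ a budget, $\mathrm{cost}:\mathcal{T}\to\mathbb{R}_{>0}$, with $\mathrm{cost}(S)=\sum_{t\in S}\mathrm{cost}(t)$, and $\mathcal{A}=(A_i)_{i\in N}$ with $A_i\subseteq\mathcal{T}$ the projects approved by voter $i$. A PB rule $f$ maps each instance to a set $W=f(I)\subseteq\mathcal{T}$ with $\mathrm{cost}(W)\le B$. For $T\subseteq\mathcal{T}$, a group $V\subseteq N$ is $T$-cohesive if $T\subseteq\bigcap_{i\in V}A_i$ and $\mathrm{cost}(T)/B\le |V|/n$; $\mathcal{V}(T)$ denotes the set of all $T$-cohesive groups. The average satisfaction of $V$ w.r.t. $W$ is $\mathrm{avg}_W(V)=\frac{1}{|V|}\sum_{i\in V}|W\cap A_i|$. The proportionality degree of $f$ for $T$ (on instance $I$) is $d_f(T)=\sup\{g:\ \min_{V\in\mathcal{V}(T)}\mathrm{avg}_{f(I)}(V)\ge \min(|T|,g)\}$. Method of Equal Shares (\textsc{mes}): each voter starts with budget $B/n$; start with $W=\emptyset$.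 Let $\ell_i$ denote voter $i$'s remaining budget ($B/n$ minus what $i$ has paid so far) and $N_t=\{i\in N: t\in A_i\}$. For $\rho\ge 0$, a project $t\in\mathcal{T}\setminus W$ is $\rho$-affordable if $\sum_{i\in N_t}\min(\ell_i,\rho)=\mathrm{cost}(t)$. If no project is $\rho$-affordable for any $\rho$, \textsc{mes} stops and returns $W$; otherwise it adds to $W$ a project that is $\rho$-affordable for the minimum possible $\rho$ (ties broken arbitrarily), each $i\in N_t$ paying $\min(\ell_i,\rho)$, and repeats. *)

(* Defs.v *)
From HB Require Import structures.
From mathcomp Require Import all_boot all_order all_algebra.
From mathcomp Require Import all_classical all_reals ereal.
Set Implicit Arguments. Unset Strict Implicit. Unset Printing Implicit Defensive.
Import Order.TTheory GRing.Theory Num.Theory.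
Local Open Scope ring_scope.

Section PB.
Variables (R : realType) (N Proj : finType).
Variables (B : R) (cost : Proj -> R) (A : N -> {set Proj}).

Definition n_voters : R := #|N|%:R.

Definition costS (S : {set Proj}) : R := \sum_(t in S) cost t.

(* l i = remaining budget of voter i. *)
Definition affordable (l : N -> R) (t : Proj) (rho : R) : Prop :=
  0 <= rho /\ \sum_(i | t \in A i) Num.min (l i) rho = cost t.

Definition mes_step (W : {set Proj}) (l : N -> R)
                    (W' : {set Proj}) (l' : N -> R) : Prop :=
  exists t rho,
    [/\ t \notin W, affordable l t rho,
        (forall t' rho', t' \notin W -> affordable l t' rho' -> rho <= rho'),
        W' = t |: W
      & l' = fun i => if t \in A i then l i - Num.min (l i) rho else l i].

Inductive mes_reach : {set Proj} -> (N -> R) -> Prop :=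
| mes_reach_init : mes_reach finset.set0 (fun _ => B / n_voters)
| mes_reach_step W l W' l' :
    mes_reach W l -> mes_step W l W' l' -> mes_reach W' l'.

Definition mes_stopped (W : {set Proj}) (l : N -> R) : Prop :=
  forall t rho, t \notin W -> ~ affordable l t rho.

(* W is a possible output of MES (for some tie-breaking). *)
Definition mes_outcome (W : {set Proj}) : Prop :=
  exists l, mes_reach W l /\ mes_stopped W l.

Definition cohesive (T : {set Proj}) (V : {set N}) : Prop :=
  T \subset \bigcap_(i in V) A i /\ costS T / B <= #|V|%:R / n_voters.

Definition avg_sat (W : {set Proj}) (V : {set N}) : R :=
  (\sum_(i in V) #|W :&: A i|%:R) / #|V|%:R.

(* min over all T-cohesive groups of avg_sat >= min(|T|, g)
   (the min over an empty family is +oo, so this is vacuous then). *)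
Definition degree_ok (W T : {set Proj}) (g : R) : Prop :=
  forall V : {set N}, cohesive T V -> Num.min (#|T|%:R) g <= avg_sat W V.

Definition prop_degree (W T : {set Proj}) : \bar R :=
  ereal_sup [set g%:E | g in [set g : R | degree_ok W T g]]%classic.

Definition max_cost (T : {set Proj}) : R := \big[Num.max/0]_(t in T) cost t.

End PB.

(* Main.v *)
Require Import Defs.
From HB Require Import structures.
From mathcomp Require Import all_boot all_order all_algebra.
From mathcomp Require Import all_classical all_reals ereal.
From mathcomp Require Import topology normedtype.
From mathcomp Require Import ring lra.
Import Order.TTheory GRing.Theory Num.Theory.
Import numFieldNormedType.Exports.
Local Open Scope ring_scope.

Lemma sum_min_cont (R : realType) (I : Type) (s : seq I) (P : pred I) (l : I -> R) :
  continuous (fun x : R => \sum_(i <- s | P i) Num.min (l i) x).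
Proof.
elim: s => [|a s IH].
  have -> : (fun x : R => \sum_(i <- [::] | P i) Num.min (l i) x) = cst 0.
    by apply/funext => x; rewrite big_nil.
  by move=> x; apply: cvg_cst.
have -> : (fun x : R => \sum_(i <- a :: s | P i) Num.min (l i) x) =
   (fun x => (if P a then Num.min (l a) x else 0) + \sum_(i <- s | P i) Num.min (l i) x).
  apply/funext => x; rewrite big_cons; by case: (P a); rewrite ?add0r.
move=> x; apply: continuousD; last exact: IH.
case: (P a); last exact: cvg_cst.
apply: (@continuous_min R R (cst (l a)) id x); first exact: cvg_cst.
exact: cvg_id.
Qed.

Lemma afford_exists (R : realType) (N Proj : finType) (cost : Proj -> R)
  (A : N -> {set Proj}) (l : N -> R) (t : Proj) :
  (forall i, 0 <= l i) -> 0 < cost t -> cost t <= \sum_(i | t \in A i) l i ->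
  exists rho, affordable cost A l t rho.
Proof.
move=> l0 ct cM.
set M := \sum_(i | t \in A i) l i.
set f := fun x : R => \sum_(i | t \in A i) Num.min (l i) x.
have M0 : 0 <= M by apply: sumr_ge0.
have f0 : f 0 = 0.
  by rewrite /f big1 // => i _; rewrite min_r.
have fM : f M = M.
  rewrite /f /M; apply: eq_bigr => i ti; rewrite min_l //.
  rewrite (bigD1 i) //= lerDl; apply: sumr_ge0 => j _; exact: l0.
have [c cin fc] : exists2 c, c \in `[0, M] & f c = cost t.
  apply: IVT => //.
    apply: continuous_subspaceT => x; exact: sum_min_cont.
  rewrite f0 fM; apply/andP; split.
    by rewrite ge_min (ltW ct).
  by rewrite le_max cM orbT.
exists c; split => //.
by move: cin; rewrite in_itv /= => /andP [].
Qed.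

Ltac splitmins R :=
  repeat (rewrite (@minEle _ R); case: ifP; [move=> ? | move/negbT; rewrite -ltNge => ?]);
  try lra.

Lemma pair_bound (R : realType) (a b r : R) (si sj : bool) : 0 <= a -> 0 <= b -> 0 <= r ->
  Num.min a b - Num.min (if si then a - Num.min a r else a) (if sj then b - Num.min b r else b)
  <= (if si then Num.min b r else 0) + (if sj then Num.min a r else 0).
Proof.
move=> a0 b0 r0.
case: si; case: sj; splitmins R.
Qed.

Definition Ufun (R : realType) {N Proj : finType} (A : N -> {set Proj}) (V : {set N})
  (W : {set Proj}) : R := \sum_(i in V) #|W :&: A i|%:R.
Definition Gfun {R : realType} {N : finType} (V : {set N}) (l : N -> R) : R :=
  \sum_(i in V) \sum_(j in V) Num.min (l i) (l j).

Lemma G_drop (R : realType) (N : finType) (V : {set N}) (l : N -> R) (S : pred N) (r : R) :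
 (forall i, 0 <= l i) -> 0 <= r ->
 Gfun V l - Gfun V (fun i => if S i then l i - Num.min (l i) r else l i)
 <= 2 * (\sum_(i in V) Num.min (l i) r) * \sum_(i in V) (S i)%:R.
Proof.
move=> l0 r0.
set F := \sum_(i in V) Num.min (l i) r.
set K := \sum_(i in V) (S i)%:R.
rewrite /Gfun -sumrB.
apply: (@le_trans _ _ (\sum_(i in V) \sum_(j in V)
   ((if S i then Num.min (l j) r else 0) + (if S j then Num.min (l i) r else 0)))).
  apply: ler_sum => i _; rewrite -sumrB; apply: ler_sum => j _.
  exact: (@pair_bound R (l i) (l j) r (S i) (S j) (l0 i) (l0 j) r0).
have E1 : \sum_(i in V) \sum_(j in V) (if S i then Num.min (l j) r else 0) = K * F.
  rewrite /K mulr_suml; apply: eq_bigr => i _; case: (S i); first by rewrite mul1r.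
  by rewrite mul0r big1.
have E2 : \sum_(i in V) \sum_(j in V) (if S j then Num.min (l i) r else 0) = K * F.
  rewrite /F mulr_sumr; apply: eq_bigr => i _.
  rewrite /K mulr_suml; apply: eq_bigr => j _; case: (S j); first by rewrite mul1r.
  by rewrite mul0r.
have -> : \sum_(i in V) \sum_(j in V)
   ((if S i then Num.min (l j) r else 0) + (if S j then Num.min (l i) r else 0)) =
   \sum_(i in V) \sum_(j in V) (if S i then Num.min (l j) r else 0) +
   \sum_(i in V) \sum_(j in V) (if S j then Num.min (l i) r else 0).
  by rewrite -big_split /=; apply: eq_bigr => i _; rewrite big_split.
rewrite E1 E2; lra.
Qed.

Lemma U_step (R : realType) (N Proj : finType) (A : N -> {set Proj}) (V : {set N})
  (W : {set Proj}) (t : Proj) : t \notin W ->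
  Ufun R A V W + \sum_(i in V) (t \in A i)%:R <= Ufun R A V (t |: W).
Proof.
move=> tW; rewrite /Ufun -big_split /=; apply: ler_sum => i _.
rewrite -natrD ler_nat.
case tA: (t \in A i) => /=.
  have -> : (#|W :&: A i| + 1 = #|t |: (W :&: A i)|)%N.
    by rewrite cardsU1 inE (negbTE tW) addnC.
  apply: subset_leq_card; apply/fintype.subsetP => x; rewrite !inE.
  by case/orP => [/eqP -> | /andP [-> ->]]; rewrite ?eqxx ?tA ?orbT.
rewrite addn0; apply: subset_leq_card; apply: finset.setSI; exact: finset.subsetUr.
Qed.

Lemma sum_sub (R : realType) (N Proj : finType) (A : N -> {set Proj}) (V : {set N})
  (t : Proj) (f : N -> R) : (forall i, i \in V -> t \in A i) -> (forall i, 0 <= f i) ->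
  \sum_(i in V) f i <= \sum_(i | t \in A i) f i.
Proof.
move=> VA f0.
rewrite (bigID (fun i => i \in V) (fun i => t \in A i)) /=.
have -> : \sum_(i | (t \in A i) && (i \in V)) f i = \sum_(i in V) f i.
  apply: eq_bigl => i; case iV: (i \in V); last by rewrite andbF.
  by rewrite (VA i iV).
by rewrite lerDl; apply: sumr_ge0.
Qed.

Lemma G_small (R : realType) (N : finType) (V : {set N}) (l : N -> R) :
  (forall i, 0 <= l i) -> Gfun V l <= #|V|%:R * \sum_(j in V) l j.
Proof.
move=> l0; rewrite /Gfun.
apply: (@le_trans _ _ (\sum_(i in V) \sum_(j in V) l j)).
  apply: ler_sum => i _; apply: ler_sum => j _; rewrite ge_min lexx; exact: orbT.
by rewrite sumr_const mulr_natl.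
Qed.

Lemma min_nonneg (R : realType) (a r : R) : 0 <= a -> 0 <= r -> 0 <= Num.min a r.
Proof. by move=> ? ?; rewrite le_min; apply/andP. Qed.

Lemma lin1 (R : realType) (v b c U U' G G' F K : R) :
  v * v * b <= 2 * c * U + G -> G - G' <= 2 * F * K -> F * K <= c * K ->
  0 <= c * U' - c * (U + K) -> v * v * b <= 2 * c * U' + G'.
Proof. lra. Qed.

Lemma inv_reach (R : realType) (N Proj : finType) (B : R) (cost : Proj -> R)
  (A : N -> {set Proj}) (V : {set N}) (t : Proj) (c : R) W l :
  0 < B -> (forall t, 0 < cost t) -> (forall i, i \in V -> t \in A i) -> cost t <= c ->
  mes_reach B cost A W l ->
  (forall i, 0 <= l i) /\
  (t \in W \/
   #|V|%:R * #|V|%:R * (B / n_voters R N) <= 2 * c * Ufun R A V W + Gfun V l \/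
   #|V|%:R * (#|V|%:R * (B / n_voters R N) - c) <= 2 * c * Ufun R A V W).
Proof.
move=> hB hcost VA ctc reach.
have c0 : 0 < c by apply: lt_le_trans (hcost t) ctc.
set v : R := #|V|%:R.
have v0 : 0 <= v by rewrite /v ler0n.
elim: reach => [|Wx lx W1 l1 _ [l0 IH] step].
  have b0 : 0 <= B / n_voters R N by apply: divr_ge0; [exact: ltW | exact: ler0n].
  split => // ; right; left.
  have -> : Ufun R A V finset.set0 = 0.
    by rewrite /Ufun big1 // => i _; rewrite finset.set0I cards0.
  rewrite /Gfun.
  have -> : \sum_(i in V) \sum_(j in V) Num.min (B / n_voters R N) (B / n_voters R N)
     = v * v * (B / n_voters R N).
    under eq_bigr => i _ do rewrite minxx sumr_const.
    by rewrite sumr_const /v -mulrA mulr_natl mulr_natl.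
  lra.
clear W l; rename Wx into W; rename lx into l.
case: step => t' [rho [nW [rho0 affsum] minim -> ->]].
have l'0 : forall i, 0 <= (if t' \in A i then l i - Num.min (l i) rho else l i).
  move=> i; case: ifP => _ //; rewrite subr_ge0 ge_min lexx //.
split => //.
have KU := @U_step R N Proj A V W t' nW.
set K := \sum_(i in V) (t' \in A i)%:R in KU.
have K0 : 0 <= K by apply: sumr_ge0 => i _; exact: ler0n.
case: IH => [tW | [H2 | H3]].
- by left; rewrite in_setU1 tW orbT.
- case tW: (t \in W); first by left; rewrite in_setU1 tW orbT.
  have [sumL|sumL] := lerP (cost t) (\sum_(i | t \in A i) l i).
    have [rt afT] := @afford_exists R N Proj cost A l t l0 (hcost t) sumL.
    have rrt := minim t rt (negbT tW) afT.
    case: afT => rt0 affT.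
    set F := \sum_(i in V) Num.min (l i) rho.
    have Fc : F <= c.
      apply: (@le_trans _ _ (\sum_(i in V) Num.min (l i) rt)).
        apply: ler_sum => i _; by rewrite le_min !ge_min lexx /= rrt orbT.
      apply: (@le_trans _ _ (cost t)) => //; rewrite -affT.
      apply: sum_sub => // i; exact: min_nonneg.
    have GD := @G_drop R N V l (fun i => t' \in A i) rho l0 rho0.
    rewrite -/F -/K in GD.
    have FK : F * K <= c * K by apply: ler_wpM2r.
    right; left.
    have cK : 0 <= c * Ufun R A V (t' |: W) - c * (Ufun R A V W + K).
      by rewrite -mulrBr; apply: mulr_ge0; [exact: ltW | rewrite subr_ge0].
    exact: (@lin1 R _ _ _ _ _ _ _ _ _ H2 GD FK cK).

  right; right.
  have Gs := @G_small R N V l l0.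
  have LV : \sum_(j in V) l j <= c.
    apply: (@le_trans _ _ (\sum_(i | t \in A i) l i)); first exact: sum_sub.
    apply: ltW; exact: lt_le_trans ctc.
  have vL : v * \sum_(j in V) l j <= v * c by apply: ler_wpM2l.
  have UU : Ufun R A V W <= Ufun R A V (t' |: W) by lra.
  have cU : c * Ufun R A V W <= c * Ufun R A V (t' |: W) by apply: ler_wpM2l => //; exact: ltW.
  rewrite -/v in Gs; lra.
- right; right.
  have UU : Ufun R A V W <= Ufun R A V (t' |: W) by lra.
  have cU : c * Ufun R A V W <= c * Ufun R A V (t' |: W) by apply: ler_wpM2l => //; exact: ltW.
  lra.
Qed.

Lemma le_bigmax_seq (R : realType) (I : eqType) (s : seq I) (P : pred I) (f : I -> R) i :
  i \in s -> P i -> f i <= \big[Num.max/0]_(j <- s | P j) f j.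
Proof.
elim: s => [//|a s IH]; rewrite in_cons big_cons => /orP [/eqP -> Pa | ins Pi].
  by rewrite Pa le_max lexx.
case: (P a); last exact: IH.
by rewrite le_max (IH ins Pi) orbT.
Qed.

Lemma fin_step (R : realType) (v b c C U : R) : 0 < c -> 0 < v -> C <= v * b ->
  v * (v * b - c) <= 2 * c * U -> (2%:R)^-1 * (C / c - 1) * v <= U.
Proof.
move=> c0 v0 Cvb H.
have c2 : 0 < 2 * c by lra.
rewrite -(ler_pM2r c2).
have -> : (2%:R)^-1 * (C / c - 1) * v * (2 * c) = v * (C - c).
  by field; rewrite gt_eqF.
have : v * (C - c) <= v * (v * b - c) by apply: ler_wpM2l; lra.
lra.
Qed.

Lemma lin2 (R : realType) (v b c U G L : R) :
  v * v * b <= 2 * c * U + G -> G <= v * L -> v * L <= v * c ->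
  v * (v * b - c) <= 2 * c * U.
Proof. lra. Qed.

Theorem theorem1 (R : realType) (N Proj : finType) (B : R) (cost : Proj -> R)
    (A : N -> {set Proj}) (hB : 0 < B) (hcost : forall t, 0 < cost t)
    (T : {set Proj}) (hT : T != finset.set0) (W : {set Proj}) :
  mes_outcome B cost A W ->
  (((2%:R)^-1 * (costS cost T / max_cost cost T - 1))%:E
    <= prop_degree B cost A W T)%E.
Proof.
move=> [l [reach stop]].
set c := max_cost cost T.
set C := costS cost T.
set g0 := (2%:R)^-1 * (C / c - 1).
have maxle : forall t, t \in T -> cost t <= c.
  by move=> t tT; apply: le_bigmax_seq => //; rewrite mem_index_enum.
have [t0 t0T] := finset.set0Pn _ hT.
have c0 : 0 < c by apply: lt_le_trans (hcost t0) (maxle t0 t0T).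
have C0 : 0 < C.
  rewrite /C /costS (bigD1 t0) //=; apply: ltr_pwDl => //.
  by apply: sumr_ge0 => i _; apply: ltW.
suff dok : degree_ok B cost A W T g0.
  by apply: ereal_sup_ubound; exists g0.
move=> V [Vsub Vcoh].
have VA : forall i, i \in V -> forall t, t \in T -> t \in A i.
  move=> i iV t tT; have := fintype.subsetP Vsub t tT.
  by move/finset.bigcapP; apply.
set v : R := #|V|%:R.
set b := B / n_voters R N.
have Cvb : C <= v * b.
  have := ler_wpM2r (ltW hB) Vcoh; rewrite divfK ?gt_eqF // => h.
  apply: le_trans h _; rewrite /b /v mulrAC mulrA //.
have vpos : 0 < v.
  rewrite /v ltr0n lt0n; apply/negP => /eqP V0.
  move: Cvb; rewrite /v V0 mul0r => h.
  by move: (lt_le_trans C0 h); rewrite ltxx.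
rewrite /avg_sat -/v ler_pdivlMr //.
case: (boolP (T \subset W)) => [TW | /fintype.subsetPn [t tT tnW]].
  apply: (@le_trans _ _ (#|T|%:R * v)).
    by apply: ler_wpM2r; [exact: ltW | rewrite ge_min lexx].
  have -> : #|T|%:R * v = \sum_(i in V) (#|T|%:R : R) by rewrite sumr_const mulr_natr.
  apply: ler_sum => i iV.
  rewrite ler_nat; apply: subset_leq_card; rewrite finset.subsetI TW /=.
  by apply/fintype.subsetP => x xT; apply: VA.
have [l0 inv] := @inv_reach R N Proj B cost A V t c W l hB hcost
   (fun i iV => VA i iV t tT) (maxle t tT) reach.
have sumL : \sum_(i | t \in A i) l i < cost t.
  rewrite ltNge; apply/negP => h.
  have [rho aff] := @afford_exists R N Proj cost A l t l0 (hcost t) h.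
  exact: stop t rho tnW aff.
have H3 : v * (v * b - c) <= 2 * c * Ufun R A V W.
  case: inv => [tW | [H2 | H3]] //; first by rewrite tW in tnW.
  have Gs := @G_small R N V l l0.
  have LV : \sum_(j in V) l j <= c.
    apply: (@le_trans _ _ (\sum_(i | t \in A i) l i)).
      by apply: sum_sub => // i iV; apply: VA.
    apply: ltW; exact: lt_le_trans (maxle t tT).
  have vL : v * \sum_(j in V) l j <= v * c by apply: (ler_wpM2l (ltW vpos) LV).
  exact: (@lin2 R _ _ _ _ _ _ H2 Gs vL).
apply: (@le_trans _ _ (g0 * v)).
  by apply: ler_wpM2r; [exact: ltW | rewrite ge_min lexx orbT].
exact: fin_step c0 vpos Cvb H3.
Qed.
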